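(* Let $(Q,\cdot)$ be a quasigroup satisfying $x(y(yz))=(x(yy))z$ for all $x,y,z\in Q$ (an LC4-quasigroup). Then $Q$ satisfies $x(x(yz))=(x(xy))z$ for all $x,y,z\in Q$ (i.e. $Q$ is an LC2-quasigroup).
   Context: A quasigroup is a set $Q$ with a binary operation $\cdot$ (written as juxtaposition) such that for all $a,b\in Q$ each of the equations $ax=b$ and $ya=b$ has a unique solution in $Q$. *)

(* Defs.v *)
Definition is_quasigroup {Q : Type} (mul : Q -> Q -> Q) : Prop :=
  (forall a b : Q, exists x : Q, mul a x = b /\ forall x', mul a x' = b -> x' = x) /\
  (forall a b : Q, exists y : Q, mul y a = b /\ forall y', mul y' a = b -> y' = y).

Definition LC4 {Q : Type} (mul : Q -> Q -> Q) : Prop :=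
  forall x y z : Q, mul x (mul y (mul y z)) = mul (mul x (mul y y)) z.

Definition LC2 {Q : Type} (mul : Q -> Q -> Q) : Prop :=
  forall x y z : Q, mul x (mul x (mul y z)) = mul (mul x (mul x y)) z.

(* Main.v *)
Require Import Defs.

Theorem mainTheorem8 (Q : Type) (mul : Q -> Q -> Q) :
  is_quasigroup mul -> LC4 mul -> LC2 mul.
Proof.
  intros [HL HR] H4 y u z.
  assert (Ldiv : forall a b, exists x, mul a x = b)
    by (intros a b; destruct (HL a b) as [x [Hx _]]; eauto).
  assert (Rdiv : forall a b, exists x, mul x a = b)
    by (intros a b; destruct (HR a b) as [x [Hx _]]; eauto).
  destruct (Ldiv y y) as [e He0].
  assert (He : forall a, mul a e = a).
  { intro a. destruct (Rdiv (mul y y) a) as [x Hx]. subst a.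
    rewrite <- H4. rewrite He0. reflexivity. }
  set (a := mul y y).
  set (w := mul u a).
  assert (Hw : forall t, mul w t = mul u (mul y (mul y t))).
  { intro t. unfold w, a. rewrite <- H4. reflexivity. }
  destruct (Rdiv (mul u u) u) as [x' Hx'].
  destruct (Rdiv a (mul x' (mul w w))) as [r Hr].
  assert (Key : forall z, mul y (mul y (mul u z)) = mul r z).
  { intro z0.
    destruct (Ldiv u (mul y (mul y (mul u z0)))) as [q Hq].
    destruct (Ldiv y z0) as [p1 Hp1].
    destruct (Ldiv y p1) as [p Hp].
    rewrite <- Hq, <- Hx', <- H4, Hq.
    rewrite <- Hp1, <- Hp.
    rewrite <- Hw, <- Hw, H4, <- Hr. unfold a. rewrite <- H4. reflexivity. }
  assert (Er : r = mul y (mul y u)).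
  { rewrite <- (He r), <- Key, He. reflexivity. }
  rewrite Key, Er. reflexivity.
Qed.
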